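(* (i) The admissible monomials of weight vector $(3)|^1$ in $P_5$ are exactly $X_{\alpha,\beta}$, $1\le\alpha<\beta\le5$; hence $\dim QP_5((3)|^1)=10$. (ii) The admissible monomials of weight vector $(3)|^2$ in $P_5$ in which every variable occurs are exactly the following 15: $x_1x_2x_3^{2}x_4^{2}x_5^{3}$, $x_1x_2x_3^{2}x_4^{3}x_5^{2}$, $x_1x_2x_3^{3}x_4^{2}x_5^{2}$, $x_1x_2^{2}x_3x_4^{2}x_5^{3}$, $x_1x_2^{2}x_3x_4^{3}x_5^{2}$, $x_1x_2^{2}x_3^{2}x_4x_5^{3}$, $x_1x_2^{2}x_3^{2}x_4^{3}x_5$, $x_1x_2^{2}x_3^{3}x_4x_5^{2}$, $x_1x_2^{2}x_3^{3}x_4^{2}x_5$, $x_1x_2^{3}x_3x_4^{2}x_5^{2}$, $x_1x_2^{3}x_3^{2}x_4x_5^{2}$, $x_1x_2^{3}x_3^{2}x_4^{2}x_5$, $x_1^{3}x_2x_3x_4^{2}x_5^{2}$, $x_1^{3}x_2x_3^{2}x_4x_5^{2}$, $x_1^{3}x_2x_3^{2}x_4^{2}x_5$. Consequently $\dim QP_5((3)|^2)=55$.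
   Context: $P_5=\mathbb F_2[x_1,\dots,x_5]$, $\deg x_i=1$, a module over the mod-2 Steenrod algebra $\mathcal A$ with augmentation ideal $\mathcal A^+$; $f\equiv g$ means $f+g\in\mathcal A^+P_5$. $X_{\alpha,\beta}=\prod_{l\in\{1,\dots,5\}\setminus\{\alpha,\beta\}}x_l$. For $x=x_1^{a_1}\cdots x_5^{a_5}$: weight vector $\omega_i(x)=\sum_j\alpha_{i-1}(a_j)$ ($\alpha_r(a)$ the $r$-th binary digit), exponent vector $\sigma(x)=(a_1,\dots,a_5)$, both ordered left-lexicographically; $\deg\omega=\sum_i2^{i-1}\omega_i$. For monomials of equal degree, $x<y$ iff $\omega(x)<\omega(y)$, or $\omega(x)=\omega(y)$ and $\sigma(x)<\sigma(y)$; $x$ is inadmissible if $x\equiv\sum_jy_j$ with monomials $y_j<x$, otherwise admissible. $(3)|^d$ is the weight vector with first $d$ entries $3$ and rest $0$. $P_5(\omega)$ is spanned by monomials $y$ with $\deg y=\deg\omega$ and $\omega(y)\le\omega$, $P_5^-(\omega)$ by those with $\omega(y)<\omega$, and $QP_5(\omega)=P_5(\omega)/(P_5(\omega)\cap(\mathcal A^+P_5+P_5^-(\omega)))$. *)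

(* Defs.v *)
From HB Require Import structures.
From mathcomp Require Import all_boot all_order all_algebra.
From mathcomp Require Import mpoly.

Set Implicit Arguments.
Unset Strict Implicit.
Unset Printing Implicit Defensive.

Import GRing.Theory.
Local Open Scope ring_scope.

(* The polynomial algebra P_5 over F_2; variable x_(i+1) is 'X_i, i : 'I_5. *)
Definition P5 := {mpoly 'F_2[5]}.
Definition mon5 := 'X_{1..5}.

(* Steenrod square Sq^k on a monomial x^a (Cartan formula with
   Sq^j(x_i^a) = C(a,j) x_i^(a+j)):
   Sq^k(x^a) = sum_{c, |c| = k} prod_i C(a_i,c_i) x^(a+c)  (mod 2). *)
Definition Sq_mon (k : nat) (a : mon5) : P5 :=
  \sum_(c : 'X_{1..5 < k.+1} | mdeg c == k)
     ((\prod_(i < 5) 'C(a i, c i))%:R : 'F_2) *: 'X_[(a + c)%MM].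

Definition Sq (k : nat) (p : P5) : P5 :=
  \sum_(m <- msupp p) p@_m *: Sq_mon k m.

(* A^+ P_5: since A^+ = sum_{k>=1} Sq^k A, A^+ P_5 is the F_2-span of
   the Sq^k f with k >= 1 and f in P_5. *)
Definition hit (f : P5) : Prop :=
  exists s : seq (nat * P5),
    all (fun kp => 0 < kp.1)%N s /\ f = \sum_(kp <- s) Sq kp.1 kp.2.

Definition steq (f g : P5) : Prop := hit (f + g).

Definition alpha (r a : nat) : nat := odd (a %/ 2 ^ r).

(* weight vector: omega_i(x) = sum_j alpha_{i-1}(a_j), i >= 1;
   here indexed from 0: wt x i = omega_{i+1}(x). *)
Definition wt (x : mon5) (i : nat) : nat := (\sum_(j < 5) alpha i (x j))%N.

Definition sigma (x : mon5) (j : 'I_5) : nat := x j.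

Definition lex_lt (f g : nat -> nat) : Prop :=
  exists i, (forall j, (j < i)%N -> f j = g j) /\ (f i < g i)%N.

Definition lex_le (f g : nat -> nat) : Prop :=
  lex_lt f g \/ (forall i, f i = g i).

Definition mon_lt (x y : mon5) : Prop :=
  mdeg x = mdeg y /\
  (lex_lt (wt x) (wt y) \/
   ((forall i, wt x i = wt y i) /\
    lex_lt (fun j => if (j < 5)%N then sigma x (inord j) else 0%N)
           (fun j => if (j < 5)%N then sigma y (inord j) else 0%N))).

Definition inadmissible (x : mon5) : Prop :=
  exists ys : seq mon5, (forall y, y \in ys -> mon_lt y x) /\
    steq 'X_[x] (\sum_(y <- ys) 'X_[y]).

Definition admissible (x : mon5) : Prop := ~ inadmissible x.

(* weight vectors are finite sequences of naturals, omega_(i+1) = nth 0 w i *)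
Definition wvec := seq nat.
Definition wfun (w : wvec) : nat -> nat := fun i => nth 0%N w i.
Definition degw (w : wvec) : nat := (\sum_(i < size w) 2 ^ i * nth 0 w i)%N.

Definition three_d (d : nat) : wvec := nseq d 3%N.

Definition inP (w : wvec) (f : P5) : Prop :=
  forall y, y \in msupp f -> mdeg y = degw w /\ lex_le (wt y) (wfun w).
Definition inPminus (w : wvec) (f : P5) : Prop :=
  forall y, y \in msupp f -> mdeg y = degw w /\ lex_lt (wt y) (wfun w).

Definition inW (w : wvec) (f : P5) : Prop :=
  inP w f /\ exists h g, hit h /\ inPminus w g /\ f = h + g.

(* dim QP_5(omega) = n : the quotient P_5(omega)/W has a basis of size n,
   i.e. there are b_1..b_n in P_5(omega) whose classes are linearly
   independent and span the quotient. *)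
Definition dimQP_is (w : wvec) (n : nat) : Prop :=
  exists b : n.-tuple P5,
    (forall i, inP w (tnth b i)) /\
    (forall c : 'I_n -> 'F_2,
        inW w (\sum_(i < n) c i *: tnth b i) -> forall i, c i = 0) /\
    (forall f, inP w f -> exists c : 'I_n -> 'F_2,
        inW w (f - \sum_(i < n) c i *: tnth b i)).

(* X_{alpha,beta} (0-based indices) *)
Definition Xab (a b : 'I_5) : mon5 :=
  [multinom (if (i == a) || (i == b) then 0 else 1)%N | i < 5].

Definition mk5 (a1 a2 a3 a4 a5 : nat) : mon5 :=
  [multinom (nth 0 [:: a1; a2; a3; a4; a5] i)%N | i < 5].

Definition list15 : seq mon5 :=
  [:: mk5 1 1 2 2 3; mk5 1 1 2 3 2; mk5 1 1 3 2 2; mk5 1 2 1 2 3;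
      mk5 1 2 1 3 2; mk5 1 2 2 1 3; mk5 1 2 2 3 1; mk5 1 2 3 1 2;
      mk5 1 2 3 2 1; mk5 1 3 1 2 2; mk5 1 3 2 1 2; mk5 1 3 2 2 1;
      mk5 3 1 1 2 2; mk5 3 1 2 1 2; mk5 3 1 2 2 1]%N.

(* Main.v *)
Require Import Defs.
From HB Require Import structures.
From mathcomp Require Import all_boot all_order all_algebra.
From mathcomp Require Import mpoly.
Set Implicit Arguments. Unset Strict Implicit. Unset Printing Implicit Defensive.
Import GRing.Theory.
Local Open Scope ring_scope.

Definition mk (l : seq nat) : mon5 := [multinom (nth 0 l i)%N | i < 5].
Lemma mkE l i : mk l i = nth 0%N l i.
Proof. by rewrite mnmE. Qed.
Definition seqm (m : mon5) : seq nat := map (fun i => m (inord i)) (iota 0 5).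
Lemma size_seqm m : size (seqm m) = 5%N. Proof. by rewrite size_map size_iota. Qed.
Lemma nth_seqm m (i : 'I_5) : nth 0%N (seqm m) i = m i.
Proof. by rewrite (nth_map 0%N) ?size_iota // nth_iota // add0n inord_val. Qed.
Lemma mk_seqm m : mk (seqm m) = m.
Proof. by apply/mnmP => i; rewrite mkE nth_seqm. Qed.
Lemma mk_eq l m : size l = 5%N -> (mk l == m) = (l == seqm m).
Proof.
move=> sl; apply/eqP/eqP => [<-|->]; last exact: mk_seqm.
apply: (@eq_from_nth _ 0%N); first by rewrite size_seqm.
move=> i; rewrite sl => Hi; have := nth_seqm (mk l) (Ordinal Hi) => /= ->.
by rewrite mkE.
Qed.
Lemma mk_inj l1 l2 : size l1 = 5%N -> size l2 = 5%N -> mk l1 = mk l2 -> l1 = l2.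
Proof. move=> s1 s2 /eqP; rewrite mk_eq // => /eqP ->; by apply/esym/eqP; rewrite -mk_eq. Qed.

Definition pol (L : seq (seq nat)) : P5 := \sum_(l <- L) 'X_[mk l].

Lemma F2nat n : (n%:R : 'F_2) = (odd n)%:R.
Proof. by rewrite -(@Fp_nat_mod 2) // modn2; case: (odd n). Qed.

Lemma pol_coef L m : (pol L)@_m = (count (fun l => mk l == m) L)%:R.
Proof.
elim: L => [|l L IH]; first by rewrite /pol big_nil mcoeff0.
by rewrite /pol big_cons mcoeffD -/(pol L) IH mcoeffX /= natrD.
Qed.

Lemma pol_coef5 L m : all (fun l => size l == 5%N) L ->
  (pol L)@_m = (odd (count_mem (seqm m) L))%:R.
Proof.
move=> HL; rewrite pol_coef F2nat; congr (_%:R); congr odd.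
apply: eq_in_count => l Hl /=. rewrite mk_eq //. by move/allP: HL => /(_ _ Hl)/eqP.
Qed.

Definition par_eq (L1 L2 : seq (seq nat)) :=
  all (fun t => odd (count_mem t L1) == odd (count_mem t L2)) (L1 ++ L2).

Lemma pol_eq L1 L2 : all (fun l => size l == 5%N) (L1 ++ L2) -> par_eq L1 L2 -> pol L1 = pol L2.
Proof.
rewrite all_cat => /andP [H1 H2] Hp; apply/mpolyP => m.
rewrite !pol_coef5 //; congr (_%:R).
case: (boolP (seqm m \in L1 ++ L2)) => Hin.
  by move: Hp; rewrite /par_eq => /allP /(_ _ Hin) /eqP ->.
have /norP [Ha Hb] : ~~ ((seqm m \in L1) || (seqm m \in L2)) by rewrite -mem_cat.
by rewrite !(count_memPn _).
Qed.

Lemma oppP (p : P5) : - p = p.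
Proof. apply/mpolyP => m; rewrite mcoeffN; exact: (oppr_pchar2 (pchar_Fp (isT : prime 2))). Qed.

Lemma Sq_mon_coef k (a u : mon5) : (Sq_mon k a)@_u =
  if (a <= u)%MM && (mdeg u == mdeg a + k)%N
  then ((\prod_(i < 5) 'C(a i, u i - a i))%N%:R : 'F_2) else 0.
Proof.
rewrite /Sq_mon raddf_sum /=.
under eq_bigr => c _ do rewrite mcoeffZ mcoeffX.
case: ifP => [/andP [Hle /eqP Hd] | Hn].
- have Hua : (u - a + a)%MM = u by rewrite submK.
  have Hk : mdeg (u - a)%MM = k.
    by apply/eqP; rewrite -(eqn_add2r (mdeg a)) -mdegD Hua Hd addnC.
  have Hc : (mdeg (u - a)%MM < k.+1)%N by rewrite Hk.
  pose c0 := @BMultinom 5 k.+1 (u - a)%MM Hc.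
  rewrite (bigD1 c0) /=; last by rewrite Hk.
  rewrite addmC Hua eqxx mulr1.
  rewrite [X in _ + X]big1 ?addr0.
    by congr (_%:R); apply: eq_bigr => i _; rewrite mnmBE.
  move=> c /andP [_ Hne]; case: eqP => [Hac|]; last by rewrite mulr0.
  exfalso; move/eqP: Hne; apply; apply: val_inj => /=.
  by rewrite -Hac addmC addmK.
- apply: big1 => c /eqP Hck; case: eqP => [Hac|]; last by rewrite mulr0.
  exfalso; move: Hn; rewrite -Hac mdegD Hck eqxx andbT => /negbT/negP; apply.
  by apply/mnm_lepP => i; rewrite mnmDE leq_addr.
Qed.

Lemma Sq_X k (m : mon5) : Sq k 'X_[m] = Sq_mon k m.
Proof. by rewrite /Sq msuppX big_seq1 mcoeffX eqxx scale1r. Qed.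

Fixpoint box (t : seq nat) : seq (seq nat) :=
  if t is x :: r then [seq a :: b | a <- iota 0 x.+1, b <- box r] else [:: [::]].

Lemma mem_box t l : (l \in box t) = (size l == size t) && [forall i : 'I_(size t), nth 0%N l i <= nth 0%N t i]%N.
Proof.
elim: t l => [|x r IH] l.
  rewrite /= inE; case: l => [|y l] //=.
  by apply/esym/forallP => -[].
apply/allpairsP/andP => [[[a b] [Ha Hb ->]]|[Hs /forallP Hf]].
  move: Hb Ha; rewrite IH mem_iota => /andP [/eqP Hs /forallP Hf] Ha; rewrite /= Hs; split => //.
  apply/forallP => -[[|i] Hi] /=; first by move: Ha; rewrite add0n ltnS.
  exact: (Hf (Ordinal (Hi : i < size r)%N)).
case: l Hs Hf => // a b /eqP [Hs] Hf; exists (a, b); split.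
- rewrite mem_iota add0n ltnS; exact: (Hf (Ordinal (isT : 0 < (size r).+1)%N)).
- rewrite IH Hs eqxx /=; apply/forallP => -[i Hi].
  exact: (Hf (Ordinal (Hi : i.+1 < (size r).+1)%N)).
- by [].
Qed.

Lemma uniq_box t : uniq (box t).
Proof.
elim: t => [|x r IH] //.
change (uniq [seq a :: b | a <- iota 0 x.+1, b <- box r]).
apply: allpairs_uniq => //; first exact: iota_uniq.
by move=> [a1 b1] [a2 b2] _ _ /= [-> ->].
Qed.

Definition prodC (a t : seq nat) : nat :=
  foldr muln 1%N (map (fun i => 'C(nth 0%N a i, nth 0%N t i - nth 0%N a i)) (iota 0 5)).

Lemma prodC_seqm m t : prodC (seqm m) t = (\prod_(i < 5) 'C(m i, mk t i - m i))%N.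
Proof.
rewrite /prodC foldrE big_map -[iota 0 5]/(index_iota 0 5) big_mkord.
by apply: eq_bigr => i _; rewrite nth_seqm mkE.
Qed.

Definition Dl (t : seq nat) : seq (seq nat) :=
  [seq a <- box t | (sumn a < sumn t)%N && odd (prodC a t)].

Fixpoint lexle (s t : seq nat) : bool :=
  match s, t with
  | [::], _ => true
  | _ :: _, [::] => false
  | x :: s', y :: t' => (x < y)%N || ((x == y) && lexle s' t')
  end.

Fixpoint pok (s : seq (seq nat)) : bool :=
  match s with
  | [::] => true
  | x :: (y :: r) => (x == y) && pok r
  | _ => false
  end.

Lemma pok_even s : pok s -> forall z, ~~ odd (count_mem z s).
Proof.
move=> H z; elim: (size s).+1 {-2}s (ltnSn (size s)) H => // n IH [|x [|y r]] //= Hs.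
move=> /andP [/eqP -> Hr]; rewrite addnA addnn oddD odd_double /=.
apply: IH Hr; by move: Hs; rewrite ltnS => /ltnW.
Qed.

Definition killck (S : seq (seq nat)) : bool := pok (sort lexle (flatten (map Dl S))).

Definition phi (S : seq (seq nat)) (p : P5) : 'F_2 := \sum_(t <- S) p@_(mk t).

Lemma phiD S p q : phi S (p + q) = phi S p + phi S q.
Proof. by rewrite /phi -big_split; apply: eq_bigr => t _; rewrite mcoeffD. Qed.
Lemma phiZ S c p : phi S (c *: p) = c * phi S p.
Proof. by rewrite /phi mulr_sumr; apply: eq_bigr => t _; rewrite mcoeffZ. Qed.
Lemma phi_sum S I (r : seq I) (F : I -> P5) : phi S (\sum_(i <- r) F i) = \sum_(i <- r) phi S (F i).
Proof.
elim: r => [|i r IH]; first by rewrite !big_nil /phi big1 // => t _; rewrite mcoeff0.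
by rewrite !big_cons phiD IH.
Qed.

Lemma natr_sumS (S : seq (seq nat)) (f : seq nat -> nat) :
  \sum_(t <- S) ((f t)%:R : 'F_2) = (sumn (map f S))%:R.
Proof. by elim: S => [|t S IH]; rewrite ?big_nil // big_cons IH /= natrD. Qed.

Lemma mdeg_mk t : size t = 5%N -> mdeg (mk t) = sumn t.
Proof.
case: t => [|a [|b [|c [|d [|e [|]]]]]] //= _.
by rewrite mdegE !big_ord_recl big_ord0 !mkE /= !addnA addn0.
Qed.

Lemma sumn_seqm m : sumn (seqm m) = mdeg m.
Proof. by rewrite -{2}(mk_seqm m) mdeg_mk // size_seqm. Qed.

Lemma mem_box_seqm m t : size t = 5%N -> (seqm m \in box t) = (m <= mk t)%MM.
Proof.
move=> Hs; rewrite mem_box size_seqm Hs eqxx /=.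
apply/forallP/mnm_lepP => H i.
  by rewrite mkE -nth_seqm; exact: (H i).
by move: (H i); rewrite mkE nth_seqm.
Qed.

Lemma kill_mon S d : all (fun t => (size t == 5%N) && (sumn t == d)) S -> killck S ->
  forall k m, (0 < k)%N -> phi S (Sq_mon k m) = 0.
Proof.
move=> HS Hk k m k0; rewrite /phi.
case: (eqVneq d (mdeg m + k)%N) => Hd; last first.
  apply: big1_seq => t Ht; rewrite Sq_mon_coef.
  move/allP: HS => /(_ _ Ht) /andP [/eqP s5 /eqP sd].
  by rewrite mdeg_mk // sd (negbTE Hd) andbF.
rewrite (eq_big_seq (fun t => ((count_mem (seqm m) (Dl t))%:R : 'F_2))).
  rewrite natr_sumS.
  have -> : sumn [seq count_mem (seqm m) (Dl t) | t <- S] = count_mem (seqm m) (flatten (map Dl S)).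
    by rewrite count_flatten -map_comp.
  rewrite F2nat.
  have := pok_even Hk (seqm m); rewrite /killck.
  have Hp : perm_eq (sort lexle (flatten (map Dl S))) (flatten (map Dl S)) by rewrite perm_sort.
  by rewrite (permP Hp) => /negbTE ->.
move=> t Ht; move/allP: HS => /(_ _ Ht) /andP [/eqP s5 /eqP sd].
rewrite Sq_mon_coef mdeg_mk // sd Hd eqxx andbT /Dl.
rewrite (count_filter) -/(count_mem _ _).
have -> : count (predI (pred1 (seqm m)) (fun a => (sumn a < sumn t)%N && odd (prodC a t))) (box t)
   = if (sumn (seqm m) < sumn t)%N && odd (prodC (seqm m) t) then count_mem (seqm m) (box t) else 0%N.
  case: ifP => Hp; [|rewrite -(count_pred0 (box t))]; apply: eq_count => a /=; case: eqP => //= ->; by rewrite Hp.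
rewrite count_uniq_mem ?uniq_box // mem_box_seqm // sumn_seqm sd Hd prodC_seqm.
rewrite (_ : (mdeg m < mdeg m + k)%N = true) ?andTb; last by rewrite -{1}(addn0 (mdeg m)) ltn_add2l.
by rewrite F2nat; case: ((m <= mk t)%MM); case: odd.
Qed.

Lemma kill S d : all (fun t => (size t == 5%N) && (sumn t == d)) S -> killck S ->
  forall h, hit h -> phi S h = 0.
Proof.
move=> HS Hk h [s [Hpos ->]]; rewrite phi_sum big_seq big1 // => kp Hkp.
have k0 : (0 < kp.1)%N by move/allP: Hpos => /(_ _ Hkp).
rewrite /Sq phi_sum big1 // => m _; by rewrite phiZ (kill_mon HS Hk _ k0) mulr0.
Qed.

Lemma phiX S m : phi S 'X_[m] = (count (fun t => mk t == m) S)%:R.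
Proof.
rewrite /phi; elim: S => [|t S IH]; first by rewrite big_nil.
by rewrite big_cons IH mcoeffX /= natrD eq_sym.
Qed.

Lemma seqm_mk x : size x = 5%N -> seqm (mk x) = x.
Proof. by move=> sx; apply: mk_inj; rewrite ?size_seqm // mk_seqm. Qed.

Lemma count_mk S x : size x = 5%N -> all (fun t => size t == 5%N) S ->
  count (fun t => mk t == mk x) S = count_mem x S.
Proof.
move=> sx HS; apply: eq_in_count => t Ht /=.
rewrite mk_eq; last by move/allP: HS => /(_ _ Ht)/eqP.
by rewrite seqm_mk.
Qed.

Definition wtl (l : seq nat) (i : nat) : nat := sumn (map (alpha i) l).

Lemma wt_mk l i : size l = 5%N -> wt (mk l) i = wtl l i.
Proof.
case: l => [|a [|b [|c [|d [|e [|]]]]]] //= _.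
by rewrite /wt /wtl !big_ord_recl big_ord0 !mkE /= !addnA addn0.
Qed.

Lemma wtl_big l i : all (fun e => e < 16)%N l -> (4 <= i)%N -> wtl l i = 0%N.
Proof.
move=> Hl Hi; rewrite /wtl; elim: l Hl => //= a l IH /andP [Ha Hl].
rewrite IH // addn0 /alpha divn_small //.
apply: leq_trans Ha _; rewrite -[16%N]/(2 ^ 4)%N leq_exp2l //.
Qed.

Definition lexb (f g : nat -> nat) (N : nat) : bool :=
  has (fun i => all (fun j => f j == g j) (iota 0 i) && (f i < g i)%N) (iota 0 N).

Lemma lexbP f g N : (forall i, (N <= i)%N -> f i = g i) -> lex_lt f g <-> lexb f g N.
Proof.
move=> Hfg; split.
  move=> [i [Hj Hi]]; apply/hasP; exists i.
    rewrite mem_iota /= add0n; case: (ltnP i N) => // /Hfg Hc.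
    by move: Hi; rewrite Hc ltnn.
  rewrite Hi andbT; apply/allP => j; rewrite mem_iota /= add0n => /Hj ->.
  by [].
move=> /hasP [i _ /andP [/allP Ha Hi]]; exists i; split => // j Hj.
by apply/eqP/Ha; rewrite mem_iota.
Qed.

Lemma lex_lt_ext f f' g g' : f =1 f' -> g =1 g' -> lex_lt f g -> lex_lt f' g'.
Proof.
move=> Hf Hg [i [Hj Hi]]; exists i; split; last by rewrite -Hf -Hg.
by move=> j /Hj; rewrite Hf Hg.
Qed.

Definition blt (x y : seq nat) : bool :=
  (sumn x == sumn y) &&
  (lexb (wtl x) (wtl y) 4 ||
   (all (fun i => wtl x i == wtl y i) (iota 0 4) && lexb (nth 0%N x) (nth 0%N y) 5)).

Definition ok5 (l : seq nat) : bool := (size l == 5%N) && all (fun e => e < 16)%N l.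

Lemma sig_mk x : size x = 5%N ->
  (fun j => if (j < 5)%N then sigma (mk x) (inord j) else 0%N) =1 nth 0%N x.
Proof.
move=> sx j; case: ltnP => Hj; first by rewrite /sigma mkE inordK.
by rewrite nth_default // sx.
Qed.

Lemma mon_ltP x y : ok5 x -> ok5 y -> mon_lt (mk x) (mk y) <-> blt x y.
Proof.
move=> /andP [/eqP sx bx] /andP [/eqP sy bY].
have Ew : forall i, (4 <= i)%N -> wtl x i = wtl y i.
  by move=> i Hi; rewrite !wtl_big.
rewrite /mon_lt /blt !mdeg_mk //; split.
  move=> [-> [Hl|[He Hs]]]; rewrite eqxx andTb.
    apply/orP; left; rewrite -lexbP //.
    by apply: lex_lt_ext Hl => i; rewrite wt_mk.
  apply/orP; right; apply/andP; split.
    by apply/allP => i _; rewrite -!wt_mk // He.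
  rewrite -lexbP; last by move=> i Hi; rewrite !nth_default ?sx ?sy.
  by apply: lex_lt_ext Hs; apply: sig_mk.
move=> /andP [/eqP -> /orP [Hl | /andP [/allP He Hs]]]; split => //.
  left; rewrite -lexbP // in Hl.
  by apply: lex_lt_ext Hl => i; rewrite wt_mk.
right; split.
  move=> i; rewrite !wt_mk //; case: (ltnP i 4) => Hi; last exact: Ew.
  by apply/eqP/He; rewrite mem_iota.
rewrite -lexbP in Hs; last by move=> i Hi; rewrite !nth_default ?sx ?sy.
by apply: lex_lt_ext Hs => j; rewrite sig_mk.
Qed.

Lemma adm_cert x S d : ok5 x ->
  all (fun t => ok5 t && (sumn t == d)) S ->
  killck S -> odd (count_mem x S) -> all (fun t => ~~ blt t x) S -> admissible (mk x).
Proof.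
move=> ox HS Hk Hodd Hnb [ys [Hlt Hhit]].
have HS' : all (fun t => (size t == 5%N) && (sumn t == d)) S.
  by apply/allP => t /(allP HS) /andP [/andP [-> _] ->].
have := kill HS' Hk Hhit; rewrite phiD phiX phi_sum big_seq big1.
  rewrite addr0 count_mk; last by apply/allP => t /(allP HS) /andP [/andP [-> _] _].
    by rewrite F2nat Hodd => /eqP; rewrite oner_eq0.
  by case/andP: ox => /eqP.
move=> y /Hlt Hy; rewrite phiX.
have -> : count (fun t => mk t == y) S = 0%N; last by [].
apply/eqP; rewrite eqn0Ngt -has_count; apply/hasPn => t Ht /=; apply/eqP => Hty.
have /andP [ot _] := allP HS _ Ht.
move: Hy; rewrite -Hty mon_ltP // => Hb.
by move: (allP Hnb _ Ht); rewrite Hb.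
Qed.

Definition leql (a u : seq nat) := all (fun i => nth 0%N a i <= nth 0%N u i)%N (iota 0 5).
Definition sql (k : nat) (a : seq nat) : seq (seq nat) :=
  [seq u <- box (map (fun e => e.*2) a) | leql a u && (sumn u == sumn a + k)%N && odd (prodC a u)].

Lemma prodC_big a t : prodC a t = (\prod_(i < 5) 'C(nth 0 a i, nth 0 t i - nth 0 a i))%N.
Proof. by rewrite /prodC foldrE big_map -[iota 0 5]/(index_iota 0 5) big_mkord. Qed.

Lemma size_box t u : u \in box t -> size u = size t.
Proof. by rewrite mem_box => /andP [/eqP]. Qed.

Lemma sql_size k a : size a = 5%N -> all (fun u => size u == 5%N) (sql k a).
Proof.
move=> sa; apply/allP => u; rewrite mem_filter => /andP [_ /size_box].
by rewrite size_map sa => ->.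
Qed.

Lemma leql_seqm a m : size a = 5%N -> leql a (seqm m) = (mk a <= m)%MM.
Proof.
move=> sa; apply/allP/mnm_lepP => H i.
  by rewrite mkE -nth_seqm; apply: H; rewrite mem_iota /= add0n.
rewrite mem_iota /= add0n => Hi; have := H (Ordinal Hi); by rewrite mkE (nth_seqm m (Ordinal Hi)).
Qed.

Lemma Sq_mon_pol k a : size a = 5%N -> Sq_mon k (mk a) = pol (sql k a).
Proof.
move=> sa; apply/mpolyP => m.
rewrite pol_coef5; last exact: sql_size.
rewrite Sq_mon_coef /sql count_filter.
set P := (fun u => _ && _).
have -> : count (predI (pred1 (seqm m)) P) (box (map (fun e => e.*2) a))
   = if P (seqm m) then count_mem (seqm m) (box (map (fun e => e.*2) a)) else 0%N.
  case: ifP => Hp; [|rewrite -(count_pred0 (box (map (fun e => e.*2) a)))]; apply: eq_count => u /=; case: eqP => //= ->; by rewrite Hp.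
rewrite /P leql_seqm // sumn_seqm -mdeg_mk // prodC_big.
rewrite count_uniq_mem ?uniq_box //.
have Hpr : (\prod_(i < 5) 'C(nth 0 a i, nth 0 (seqm m) i - nth 0 a i))%N = (\prod_(i < 5) 'C(mk a i, m i - mk a i))%N.
  by apply: eq_bigr => i _; rewrite nth_seqm mkE.
rewrite Hpr.
case: ((mk a <= m)%MM) => //=; case: (mdeg m == _) => //=.
rewrite F2nat; case Hodd: (odd _) => //=.
rewrite mem_box size_seqm size_map sa eqxx /=.
have -> // : [forall i : 'I_5, nth 0 (seqm m) i <= nth 0 [seq e.*2 | e <- a] i]%N.
apply/forallP => i; rewrite nth_seqm (nth_map 0%N) ?sa // leqNgt; apply/negP => Hgt.
have H0 : 'C(mk a i, m i - mk a i) = 0%N.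
  apply: bin_small; rewrite mkE ltn_subRL addnn //.
by move: Hodd; rewrite (bigD1 i) //= H0 mul0n.
Qed.

Lemma pol_cat L1 L2 : pol (L1 ++ L2) = pol L1 + pol L2.
Proof. by rewrite /pol big_cat. Qed.

Lemma pol_flatten (Ls : seq (seq (seq nat))) : pol (flatten Ls) = \sum_(L <- Ls) pol L.
Proof.
elim: Ls => [|L Ls IH]; first by rewrite /pol !big_nil.
by rewrite /= pol_cat IH big_cons.
Qed.

Lemma inadm_cert x ys ks : ok5 x -> all ok5 ys -> all (fun y => blt y x) ys ->
  all (fun kp => (0 < kp.1)%N && (size kp.2 == 5%N)) ks ->
  par_eq (x :: ys) (flatten (map (fun kp => sql kp.1 kp.2) ks)) -> inadmissible (mk x).
Proof.
move=> ox oys Hlt Hks Hpar; exists (map mk ys); split.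
  move=> y /mapP [t Ht ->]; apply/mon_ltP => //; [exact: (allP oys) | exact: (allP Hlt)].
exists (map (fun kp => (kp.1, 'X_[mk kp.2])) ks); split.
  by rewrite all_map; apply/allP => kp /(allP Hks) /andP [].
have -> : 'X_[mk x] + \sum_(y <- map mk ys) 'X_[y] = pol (x :: ys).
  by rewrite /pol big_cons big_map.
rewrite big_map (eq_big_seq (fun kp => pol (sql kp.1 kp.2))); last first.
  by move=> kp /(allP Hks) /andP [_ /eqP s5] /=; rewrite Sq_X Sq_mon_pol.
rewrite -(big_map (fun kp => sql kp.1 kp.2) xpredT pol) -pol_flatten.
apply: pol_eq => //; rewrite all_cat; apply/andP; split.
  rewrite /= (andP ox).1 /=; apply/allP => y /(allP oys) /andP [] //.
apply/allP => u /flattenP [L /mapP [kp /(allP Hks) /andP [_ /eqP s5] ->] Hu].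
exact: (allP (sql_size kp.1 s5)).
Qed.

Fixpoint comps (n d : nat) : seq (seq nat) :=
  if n is n'.+1 then flatten [seq [seq a :: r | r <- comps n' (d - a)] | a <- iota 0 d.+1]
  else (if d == 0%N then [:: [::]] else [::]).

Lemma comps_complete (l : seq nat) : l \in comps (size l) (sumn l) .
Proof.
elim: l => [|a r IH] //.
change (a :: r \in flatten [seq [seq a0 :: r0 | r0 <- comps (size r) (a + sumn r - a0)] | a0 <- iota 0 (a + sumn r).+1]).
apply/flattenP; exists [seq a :: r0 | r0 <- comps (size r) (a + sumn r - a)].
  apply/mapP; exists a => //; rewrite mem_iota /= add0n ltnS leq_addr //.
by rewrite addKn; apply/mapP; exists r.
Qed.

Lemma comps_seqm m : seqm m \in comps 5 (mdeg m).
Proof. by have := comps_complete (seqm m); rewrite size_seqm sumn_seqm. Qed.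

Lemma F2_cases (a : 'F_2) : a = 0 \/ a = 1.
Proof. by case: a => [[|[|]]] // Ha; [left|right]; apply: val_inj. Qed.

Lemma hit0 : hit 0.
Proof. by exists [::]; split => //; rewrite big_nil. Qed.
Lemma hitD h1 h2 : hit h1 -> hit h2 -> hit (h1 + h2).
Proof.
move=> [s1 [H1 ->]] [s2 [H2 ->]]; exists (s1 ++ s2); split; last by rewrite big_cat.
by rewrite all_cat H1 H2.
Qed.
Lemma hitZ a h : hit h -> hit (a *: h).
Proof. by move=> Hh; case: (F2_cases a) => ->; rewrite ?scale0r ?scale1r //; exact: hit0. Qed.

Definition cond_of (Q : mon5 -> Prop) (p : P5) := forall y, p@_y != 0 -> Q y.
Lemma condD Q p q : cond_of Q p -> cond_of Q q -> cond_of Q (p + q).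
Proof.
move=> Hp Hq y; rewrite mcoeffD; case: (eqVneq (p@_y) 0) => [->|/Hp //].
by rewrite add0r => /Hq.
Qed.
Lemma condZ Q a p : cond_of Q p -> cond_of Q (a *: p).
Proof. by move=> Hp y; rewrite mcoeffZ; case: (eqVneq (p@_y) 0) => [->|/Hp //]; rewrite mulr0 eqxx. Qed.
Lemma cond0 Q : cond_of Q 0.
Proof. by move=> y; rewrite mcoeff0 eqxx. Qed.
Lemma condN Q p : cond_of Q p -> cond_of Q (- p).
Proof. by rewrite oppP. Qed.
Lemma cond_sum Q I (r : seq I) (F : I -> P5) : (forall i, cond_of Q (F i)) -> cond_of Q (\sum_(i <- r) F i).
Proof. move=> H; elim: r => [|i r IH]; rewrite ?big_nil ?big_cons; [exact: cond0 | exact: condD]. Qed.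
Lemma condX (Q : mon5 -> Prop) m : Q m -> cond_of Q 'X_[m].
Proof. by move=> Hm y; rewrite mcoeffX; case: (eqVneq m y) => [<-|_] //; rewrite eqxx. Qed.

Lemma inP_cond w p : inP w p <-> cond_of (fun y => mdeg y = degw w /\ lex_le (wt y) (wfun w)) p.
Proof. by split => H y; [rewrite -mcoeff_msupp => /H | move=> Hy; apply: H; rewrite -mcoeff_msupp]. Qed.
Lemma inPm_cond w p : inPminus w p <-> cond_of (fun y => mdeg y = degw w /\ lex_lt (wt y) (wfun w)) p.
Proof. by split => H y; [rewrite -mcoeff_msupp => /H | move=> Hy; apply: H; rewrite -mcoeff_msupp]. Qed.

Definition degc (w : wvec) : nat := sumn (map (fun i => 2 ^ i * nth 0 w i)%N (iota 0 (size w))).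
Lemma degcE w : degc w = degw w.
Proof. by rewrite /degc /degw sumnE big_map -(big_mkord xpredT (fun i => 2 ^ i * nth 0 w i)%N) /index_iota subn0. Qed.
Definition pmin (w : wvec) (t : seq nat) := (sumn t == degc w) && lexb (wtl t) (nth 0%N w) 4.
Definition weqb (w : wvec) (t : seq nat) := all (fun i => wtl t i == nth 0%N w i) (iota 0 4).

Lemma pminP w t : (size w <= 4)%N -> ok5 t ->
  (mdeg (mk t) = degw w /\ lex_lt (wt (mk t)) (wfun w)) <-> pmin w t.
Proof.
move=> sw /andP [/eqP st bt].
have E : forall i, (4 <= i)%N -> wtl t i = nth 0%N w i.
  by move=> i Hi; rewrite wtl_big // nth_default //; apply: leq_trans sw Hi.
rewrite /pmin mdeg_mk // degcE; split.
  move=> [-> H]; rewrite eqxx /=; apply/(lexbP E); apply: lex_lt_ext H => i; by rewrite ?wt_mk.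
move=> /andP [/eqP -> /(lexbP E) H]; split => //; apply: lex_lt_ext H => i; by rewrite ?wt_mk.
Qed.

Lemma weqP w t : (size w <= 4)%N -> ok5 t ->
  (forall i, wt (mk t) i = wfun w i) <-> weqb w t.
Proof.
move=> sw /andP [/eqP st bt]; split.
  by move=> H; apply/allP => i _; rewrite -wt_mk // H.
move=> /allP H i; rewrite wt_mk // /wfun; case: (ltnP i 4) => Hi.
  by apply/eqP/H; rewrite mem_iota.
by rewrite wtl_big // nth_default //; apply: leq_trans sw Hi.
Qed.

Lemma sum_count n (V : nat -> P5) (nf : seq nat) : all (fun j => j < n)%N nf ->
  \sum_(j < n) ((count_mem (nat_of_ord j) nf)%:R : 'F_2) *: V j = \sum_(j <- nf) V j.
Proof.
elim: nf => [_|x nf IH /andP [Hx Hnf]].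
  by rewrite big_nil big1 // => j _; rewrite scale0r.
rewrite big_cons -IH //.
under eq_bigr => j _ do rewrite /= natrD scalerDl.
rewrite big_split /=; congr (_ + _).
rewrite (bigD1 (Ordinal Hx)) //= eqxx scale1r big1 ?addr0 // => j Hj.
by rewrite (_ : (x == j) = false) ?scale0r //; apply/negbTE; apply: contra Hj => /eqP Hxj; apply/eqP/val_inj.
Qed.

Definition certT := (nat * seq nat * seq nat * seq (seq nat))%type.

Definition certok (w : wvec) (BL : seq (seq nat)) (C : seq nat -> option certT) (l : seq nat) : bool :=
  (l \in BL) ||
  match C l with
  | Some (k, a, nf, gl) => [&& (0 < k)%N, size a == 5%N, all (fun j => j < size BL)%N nf,
                             all (fun t => ok5 t && pmin w t) gl &
                             par_eq (l :: map (nth [::] BL) nf ++ gl) (sql k a)]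
  | None => false
  end.

Definition funok w (BL : seq (seq nat)) (F : seq (seq (seq nat))) (i : nat) : bool :=
  [&& all (fun t => ok5 t && (sumn t == degc w) && ~~ pmin w t) (nth [::] F i), killck (nth [::] F i) &
      all (fun j => odd (count_mem (nth [::] BL j) (nth [::] F i)) == (i == j)) (iota 0 (size BL))].

Lemma addpp (p : P5) : p + p = 0.
Proof. by rewrite -{1}(oppP p) addNr. Qed.

Lemma pol_cons l L : pol (l :: L) = 'X_[mk l] + pol L.
Proof. by rewrite /pol big_cons. Qed.

Lemma dim_cert w BL F C :
  (size w <= 4)%N -> (degc w < 16)%N ->
  all (fun l => ok5 l && (sumn l == degc w) && weqb w l) BL ->
  all (funok w BL F) (iota 0 (size BL)) ->
  all (fun l => weqb w l ==> certok w BL C l) (comps 5 (degc w)) ->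
  dimQP_is w (size BL).
Proof.
move=> sw dw HB HF HC.
set n := size BL.
have iotaI : forall j : 'I_n, (j : nat) \in iota 0 n by move=> j; rewrite mem_iota /= add0n.
pose bl := fun j => ('X_[mk (nth [::] BL j)] : P5).
exists (map_tuple (fun l => ('X_[mk l] : P5)) (in_tuple BL)).
have Tb : forall i : 'I_n, tnth (map_tuple (fun l => ('X_[mk l] : P5)) (in_tuple BL)) i = bl i.
  by move=> i; rewrite tnth_map (tnth_nth [::]).
have HBi : forall j, (j < n)%N -> [/\ ok5 (nth [::] BL j), sumn (nth [::] BL j) = degc w & weqb w (nth [::] BL j)].
  move=> j Hj; have /andP [/andP [o /eqP s] e] := allP HB _ (mem_nth [::] Hj); by split.
have inPb : forall j, (j < n)%N -> inP w (bl j).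
  move=> j /HBi [o s e]; apply/inP_cond; apply: condX; split.
    by rewrite mdeg_mk // ?s ?degcE //; case/andP: o => /eqP.
  by right; apply/(weqP sw o).
split; first by move=> i; rewrite Tb; apply: inPb.
split.
  move=> c [_ [h [g [Hh [Hg Heq]]]]] i.
  have /and3P [HS Hk Hc] := allP HF i (iotaI _).
  set S := nth [::] F i in HS Hk Hc.
  have HS' : all (fun t => (size t == 5%N) && (sumn t == degc w)) S.
    by apply/allP => t /(allP HS) /andP [/andP [/andP [-> _] ->] _].
  have := congr1 (phi S) Heq.
  rewrite phiD (kill HS' Hk Hh) add0r.
  have -> : phi S g = 0.
    rewrite /phi big_seq big1 // => t Ht; case: (eqVneq (g@_(mk t)) 0) => // Hne; exfalso.
    have /andP [/andP [o _] np] := allP HS _ Ht.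
    have := (inPm_cond w g).1 Hg (mk t) Hne; move/(pminP sw o) => Hp.
    by rewrite Hp in np.
  rewrite phi_sum.
  have Hphi : forall j : 'I_n, phi S (bl j) = ((i == j :> nat))%:R.
    move=> j; rewrite /bl phiX count_mk; last by apply/allP => t /(allP HS') /andP [->].
      by rewrite F2nat; move: (allP Hc j (iotaI _)) => /eqP ->.
    by case: (HBi j (ltn_ord j)) => /andP [/eqP].
  under eq_bigr => j _ do rewrite phiZ Tb Hphi.
  rewrite (bigD1 i) //= eqxx mulr1 big1 ?addr0 // => j Hj.
  by rewrite (_ : (i == j :> nat) = false) ?mulr0 //; apply/negbTE; rewrite eq_sym.
move=> f Hf.
pose G (p : P5) := exists c : 'I_n -> 'F_2, exists h g, hit h /\ inPminus w g /\
   p - \sum_(i < n) c i *: tnth (map_tuple (fun l => ('X_[mk l] : P5)) (in_tuple BL)) i = h + g.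
suff [c [h [g [Hh [Hg Heq]]]]] : G f.
  exists c; split; last by exists h, g.
  apply/inP_cond; apply: condD; first exact: (inP_cond w f).1 Hf.
  apply: condN; apply: cond_sum => j; apply: condZ; apply/inP_cond; rewrite Tb; exact: inPb.
have G0 : G 0.
  exists (fun _ => 0), 0, 0; split; first exact: hit0.
  split; first exact: (inPm_cond w 0).2 (@cond0 _).
  by rewrite big1 ?subr0 ?addr0 // => j _; rewrite scale0r.
have GD : forall p q, G p -> G q -> G (p + q).
  move=> p q [c [h [g [Hh [Hg Hp]]]]] [c' [h' [g' [Hh' [Hg' Hq]]]]].
  exists (fun i => c i + c' i), (h + h'), (g + g'); split; first exact: hitD.
  split; first by apply/(inPm_cond w); apply: condD; [exact: (inPm_cond w g).1 Hg | exact: (inPm_cond w g').1 Hg'].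
  under eq_bigr => j _ do rewrite scalerDl.
  by rewrite big_split opprD addrACA Hp Hq addrACA.
have GZ : forall a p, G p -> G (a *: p).
  move=> a p [c [h [g [Hh [Hg Hp]]]]].
  exists (fun i => a * c i), (a *: h), (a *: g); split; first exact: hitZ.
  split; first by apply/(inPm_cond w); apply: condZ; exact: (inPm_cond w g).1 Hg.
  under eq_bigr => j _ do rewrite -scalerA.
  by rewrite -scaler_sumr -scalerBr Hp scalerDr.
have GX : forall m, m \in msupp f -> G 'X_[m].
  move=> m Hm; have [Hd [Hl|He]] := Hf m Hm.
    exists (fun _ => 0), 0, 'X_[m]; split; first exact: hit0.
    split; first by apply/(inPm_cond w); apply: condX.
    by rewrite big1 ?subr0 ?add0r // => j _; rewrite scale0r.
  rewrite -degcE in Hd; set l := seqm m.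
  have ol : ok5 l.
    apply/andP; split; first by rewrite size_seqm.
    apply/allP => e /mapP [i Hi ->].
    apply: leq_ltn_trans dw; rewrite -Hd mdegE (bigD1 (inord i)) //=; exact: leq_addr.
  have wl : weqb w l by apply/(weqP sw ol); rewrite mk_seqm.
  have lc : l \in comps 5 (degc w) by rewrite -Hd comps_seqm.
  move: (implyP (allP HC l lc) wl); rewrite /certok; case/orP => [Hin|].
    have Hj : (index l BL < n)%N by rewrite index_mem.
    exists (fun i => (i == Ordinal Hj)%:R), 0, 0; split; first exact: hit0.
    split; first exact: (inPm_cond w 0).2 (@cond0 _).
    rewrite (bigD1 (Ordinal Hj)) //= eqxx scale1r big1 ?addr0.
      by rewrite Tb /bl /= nth_index // mk_seqm subrr.
    by move=> j /negbTE ->; rewrite scale0r.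
  case HCl : (C l) => [[[[k a] nf] gl]|] //.
  move=> /and5P [k0 /eqP sa Hnf Hgl Hpar].
  exists (fun i => (count_mem (nat_of_ord i) nf)%:R), (Sq k 'X_[mk a]), (pol gl); split.
    by exists [:: (k, 'X_[mk a])]; split; rewrite ?big_seq1 //= andbT.
  split.
    apply/inPm_cond => y; rewrite pol_coef; case: (eqVneq (count (fun t => mk t == y) gl) 0%N) => [->|].
      by rewrite eqxx.
    rewrite -lt0n -has_count => /hasP [t Ht /eqP <-] _.
    by have /andP [o p] := allP Hgl _ Ht; apply/(pminP sw o).
  under eq_bigr => j _ do rewrite Tb.
  rewrite (sum_count bl Hnf) -(big_map (nth [::] BL) xpredT (fun l => 'X_[mk l])) -/(pol _).
  have Hsz : all (fun l => size l == 5%N) ((l :: map (nth [::] BL) nf ++ gl) ++ sql k a).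
    rewrite all_cat; apply/andP; split; last exact: sql_size.
    apply/andP; split; first by rewrite /l size_seqm.
    rewrite -/(all _ _) all_cat; apply/andP; split.
      apply/allP => t /mapP [j Hj ->]; have [o _ _] := HBi j (allP Hnf _ Hj); by case/andP: o.
    by apply/allP => t /(allP Hgl) /andP [/andP [] ].
  have Hpol := pol_eq Hsz Hpar.
  rewrite pol_cons pol_cat mk_seqm -Sq_mon_pol // -Sq_X in Hpol.
  by rewrite oppP -Hpol -!addrA (addpp (pol gl)) addr0.
rewrite {1}(mpolyE f) big_seq; apply: big_ind => //.
by move=> m Hm; apply: GZ; apply: GX.
Qed.

Fixpoint lookup (l : seq nat) (t : seq (seq nat * certT)) : option certT :=
  if t is (l', c) :: t' then (if l == l' then Some c else lookup l t') else None.

Definition BL2 : seq (seq nat) := ([:: [:: 0; 0; 3; 3; 3]; [:: 0; 1; 2; 3; 3]; [:: 0; 1; 3; 2; 3]; [:: 0; 1; 3; 3; 2]; [:: 0; 3; 0; 3; 3]; [:: 0; 3; 1; 2; 3]; [:: 0; 3; 1; 3; 2]; [:: 0; 3; 3; 0; 3]; [:: 0; 3; 3; 1; 2]; [:: 0; 3; 3; 3; 0]; [:: 1; 0; 2; 3; 3]; [:: 1; 0; 3; 2; 3]; [:: 1; 0; 3; 3; 2]; [:: 1; 1; 2; 2; 3]; [:: 1; 1; 2; 3; 2]; [:: 1; 1; 3; 2; 2]; [:: 1; 2; 0; 3; 3]; [:: 1; 2; 1; 2; 3]; [:: 1; 2; 1; 3; 2]; [:: 1; 2; 2; 1; 3];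 [:: 1; 2; 2; 3; 1]; [:: 1; 2; 3; 0; 3]; [:: 1; 2; 3; 1; 2]; [:: 1; 2; 3; 2; 1]; [:: 1; 2; 3; 3; 0]; [:: 1; 3; 0; 2; 3]; [:: 1; 3; 0; 3; 2]; [:: 1; 3; 1; 2; 2]; [:: 1; 3; 2; 0; 3]; [:: 1; 3; 2; 1; 2]; [:: 1; 3; 2; 2; 1]; [:: 1; 3; 2; 3; 0]; [:: 1; 3; 3; 0; 2]; [:: 1; 3; 3; 2; 0]; [:: 3; 0; 0; 3; 3]; [:: 3; 0; 1; 2; 3]; [:: 3; 0; 1; 3; 2]; [:: 3; 0; 3; 0; 3]; [:: 3; 0; 3; 1; 2]; [:: 3; 0; 3; 3; 0]; [:: 3; 1; 0; 2; 3]; [:: 3; 1; 0; 3; 2]; [:: 3; 1; 1; 2; 2]; [:: 3; 1; 2; 0; 3]; [:: 3; 1; 2; 1; 2]; [:: 3; 1; 2; 2; 1]; [:: 3; 1; 2; 3; 0]; [:: 3; 1; 3; 0; 2]; [:: 3; 1; 3; 2; 0]; [:: 3; 3; 0; 0; 3]; [:: 3; 3; 0; 1; 2]; [:: 3; 3; 0; 3; 0]; [:: 3; 3; 1; 0; 2]; [:: 3; 3; 1; 2; 0]; [:: 3; 3; 3; 0; 0]])%N.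
Definition F2l : seq (seq (seq nat)) := [:: [:: [:: 0; 0; 3; 3; 3]];
  [:: [:: 0; 2; 1; 3; 3]; [:: 0; 1; 2; 3; 3]];
  [:: [:: 0; 2; 3; 1; 3]; [:: 0; 1; 3; 2; 3]];
  [:: [:: 0; 2; 3; 3; 1]; [:: 0; 1; 3; 3; 2]];
  [:: [:: 0; 3; 0; 3; 3]];
  [:: [:: 0; 3; 2; 1; 3]; [:: 0; 3; 1; 2; 3]];
  [:: [:: 0; 3; 2; 3; 1]; [:: 0; 3; 1; 3; 2]];
  [:: [:: 0; 3; 3; 0; 3]];
  [:: [:: 0; 3; 3; 2; 1]; [:: 0; 3; 3; 1; 2]];
  [:: [:: 0; 3; 3; 3; 0]];
  [:: [:: 2; 0; 1; 3; 3]; [:: 1; 0; 2; 3; 3]];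
  [:: [:: 2; 0; 3; 1; 3]; [:: 1; 0; 3; 2; 3]];
  [:: [:: 2; 0; 3; 3; 1]; [:: 1; 0; 3; 3; 2]];
  [:: [:: 2; 1; 1; 2; 3]; [:: 2; 1; 2; 1; 3]; [:: 1; 1; 1; 1; 5]; [:: 1; 1; 2; 2; 3]];
  [:: [:: 2; 1; 1; 3; 2]; [:: 2; 1; 2; 3; 1]; [:: 1; 1; 1; 5; 1]; [:: 1; 1; 2; 3; 2]];
  [:: [:: 2; 1; 3; 1; 2]; [:: 2; 1; 3; 2; 1]; [:: 1; 1; 5; 1; 1]; [:: 1; 1; 3; 2; 2]];
  [:: [:: 2; 1; 0; 3; 3]; [:: 1; 2; 0; 3; 3]];
  [:: [:: 2; 1; 1; 2; 3]; [:: 2; 2; 1; 1; 3]; [:: 1; 1; 1; 1; 5]; [:: 1; 2; 1; 2; 3]];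
  [:: [:: 2; 1; 1; 3; 2]; [:: 2; 2; 1; 3; 1]; [:: 1; 1; 1; 5; 1]; [:: 1; 2; 1; 3; 2]];
  [:: [:: 2; 1; 2; 1; 3]; [:: 2; 2; 1; 1; 3]; [:: 1; 1; 1; 1; 5]; [:: 1; 2; 2; 1; 3]];
  [:: [:: 2; 1; 2; 3; 1]; [:: 2; 2; 1; 3; 1]; [:: 1; 1; 1; 5; 1]; [:: 1; 2; 2; 3; 1]];
  [:: [:: 2; 1; 3; 0; 3]; [:: 1; 2; 3; 0; 3]];
  [:: [:: 2; 1; 3; 1; 2]; [:: 2; 2; 3; 1; 1]; [:: 1; 1; 5; 1; 1]; [:: 1; 2; 3; 1; 2]];
  [:: [:: 2; 1; 3; 2; 1]; [:: 2; 2; 3; 1; 1]; [:: 1; 1; 5; 1; 1]; [:: 1; 2; 3; 2; 1]];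
  [:: [:: 2; 1; 3; 3; 0]; [:: 1; 2; 3; 3; 0]];
  [:: [:: 2; 3; 0; 1; 3]; [:: 1; 3; 0; 2; 3]];
  [:: [:: 2; 3; 0; 3; 1]; [:: 1; 3; 0; 3; 2]];
  [:: [:: 2; 3; 1; 1; 2]; [:: 2; 3; 1; 2; 1]; [:: 1; 5; 1; 1; 1]; [:: 1; 3; 1; 2; 2]];
  [:: [:: 2; 3; 1; 0; 3]; [:: 1; 3; 2; 0; 3]];
  [:: [:: 2; 3; 1; 1; 2]; [:: 2; 3; 2; 1; 1]; [:: 1; 5; 1; 1; 1]; [:: 1; 3; 2; 1; 2]];
  [:: [:: 2; 3; 1; 2; 1]; [:: 2; 3; 2; 1; 1]; [:: 1; 5; 1; 1; 1]; [:: 1; 3; 2; 2; 1]];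
  [:: [:: 2; 3; 1; 3; 0]; [:: 1; 3; 2; 3; 0]];
  [:: [:: 2; 3; 3; 0; 1]; [:: 1; 3; 3; 0; 2]];
  [:: [:: 2; 3; 3; 1; 0]; [:: 1; 3; 3; 2; 0]];
  [:: [:: 3; 0; 0; 3; 3]];
  [:: [:: 3; 0; 2; 1; 3]; [:: 3; 0; 1; 2; 3]];
  [:: [:: 3; 0; 2; 3; 1]; [:: 3; 0; 1; 3; 2]];
  [:: [:: 3; 0; 3; 0; 3]];
  [:: [:: 3; 0; 3; 2; 1]; [:: 3; 0; 3; 1; 2]];
  [:: [:: 3; 0; 3; 3; 0]];
  [:: [:: 3; 2; 0; 1; 3]; [:: 3; 1; 0; 2; 3]];
  [:: [:: 3; 2; 0; 3; 1]; [:: 3; 1; 0; 3; 2]];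
  [:: [:: 3; 2; 1; 1; 2]; [:: 3; 2; 1; 2; 1]; [:: 5; 1; 1; 1; 1]; [:: 3; 1; 1; 2; 2]];
  [:: [:: 3; 2; 1; 0; 3]; [:: 3; 1; 2; 0; 3]];
  [:: [:: 3; 2; 1; 1; 2]; [:: 3; 2; 2; 1; 1]; [:: 5; 1; 1; 1; 1]; [:: 3; 1; 2; 1; 2]];
  [:: [:: 3; 2; 1; 2; 1]; [:: 3; 2; 2; 1; 1]; [:: 5; 1; 1; 1; 1]; [:: 3; 1; 2; 2; 1]];
  [:: [:: 3; 2; 1; 3; 0]; [:: 3; 1; 2; 3; 0]];
  [:: [:: 3; 2; 3; 0; 1]; [:: 3; 1; 3; 0; 2]];
  [:: [:: 3; 2; 3; 1; 0]; [:: 3; 1; 3; 2; 0]];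
  [:: [:: 3; 3; 0; 0; 3]];
  [:: [:: 3; 3; 0; 2; 1]; [:: 3; 3; 0; 1; 2]];
  [:: [:: 3; 3; 0; 3; 0]];
  [:: [:: 3; 3; 2; 0; 1]; [:: 3; 3; 1; 0; 2]];
  [:: [:: 3; 3; 2; 1; 0]; [:: 3; 3; 1; 2; 0]];
  [:: [:: 3; 3; 3; 0; 0]]]%N.
Definition C2tab : seq (seq nat * certT) := [:: ([:: 0; 2; 1; 3; 3], (1, [:: 0; 1; 1; 3; 3], [:: 1], [:: [:: 0; 1; 1; 3; 4]; [:: 0; 1; 1; 4; 3]]));
  ([:: 0; 2; 3; 1; 3], (1, [:: 0; 1; 3; 1; 3], [:: 2], [:: [:: 0; 1; 3; 1; 4]; [:: 0; 1; 4; 1; 3]]));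
  ([:: 0; 2; 3; 3; 1], (1, [:: 0; 1; 3; 3; 1], [:: 3], [:: [:: 0; 1; 3; 4; 1]; [:: 0; 1; 4; 3; 1]]));
  ([:: 0; 3; 2; 1; 3], (1, [:: 0; 3; 1; 1; 3], [:: 5], [:: [:: 0; 3; 1; 1; 4]; [:: 0; 4; 1; 1; 3]]));
  ([:: 0; 3; 2; 3; 1], (1, [:: 0; 3; 1; 3; 1], [:: 6], [:: [:: 0; 3; 1; 4; 1]; [:: 0; 4; 1; 3; 1]]));
  ([:: 0; 3; 3; 2; 1], (1, [:: 0; 3; 3; 1; 1], [:: 8], [:: [:: 0; 3; 4; 1; 1]; [:: 0; 4; 3; 1; 1]]));
  ([:: 2; 0; 1; 3; 3], (1, [:: 1; 0; 1; 3; 3], [:: 10], [:: [:: 1; 0; 1; 3; 4]; [:: 1; 0; 1; 4; 3]]));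
  ([:: 2; 0; 3; 1; 3], (1, [:: 1; 0; 3; 1; 3], [:: 11], [:: [:: 1; 0; 3; 1; 4]; [:: 1; 0; 4; 1; 3]]));
  ([:: 2; 0; 3; 3; 1], (1, [:: 1; 0; 3; 3; 1], [:: 12], [:: [:: 1; 0; 3; 4; 1]; [:: 1; 0; 4; 3; 1]]));
  ([:: 2; 1; 0; 3; 3], (1, [:: 1; 1; 0; 3; 3], [:: 16], [:: [:: 1; 1; 0; 3; 4]; [:: 1; 1; 0; 4; 3]]));
  ([:: 2; 1; 1; 2; 3], (1, [:: 1; 1; 1; 2; 3], [:: 13; 17], [:: [:: 1; 1; 1; 2; 4]]));
  ([:: 2; 1; 1; 3; 2], (1, [:: 1; 1; 1; 3; 2], [:: 14; 18], [:: [:: 1; 1; 1; 4; 2]]));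
  ([:: 2; 1; 2; 1; 3], (1, [:: 1; 1; 2; 1; 3], [:: 13; 19], [:: [:: 1; 1; 2; 1; 4]]));
  ([:: 2; 1; 2; 3; 1], (1, [:: 1; 1; 2; 3; 1], [:: 14; 20], [:: [:: 1; 1; 2; 4; 1]]));
  ([:: 2; 1; 3; 0; 3], (1, [:: 1; 1; 3; 0; 3], [:: 21], [:: [:: 1; 1; 3; 0; 4]; [:: 1; 1; 4; 0; 3]]));
  ([:: 2; 1; 3; 1; 2], (1, [:: 1; 1; 3; 1; 2], [:: 15; 22], [:: [:: 1; 1; 4; 1; 2]]));
  ([:: 2; 1; 3; 2; 1], (1, [:: 1; 1; 3; 2; 1], [:: 15; 23], [:: [:: 1; 1; 4; 2; 1]]));
  ([:: 2; 1; 3; 3; 0], (1, [:: 1; 1; 3; 3; 0], [:: 24], [:: [:: 1; 1; 3; 4; 0]; [:: 1; 1; 4; 3; 0]]));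
  ([:: 2; 2; 1; 1; 3], (1, [:: 1; 2; 1; 1; 3], [:: 17; 19], [:: [:: 1; 2; 1; 1; 4]]));
  ([:: 2; 2; 1; 3; 1], (1, [:: 1; 2; 1; 3; 1], [:: 18; 20], [:: [:: 1; 2; 1; 4; 1]]));
  ([:: 2; 2; 3; 1; 1], (1, [:: 1; 2; 3; 1; 1], [:: 22; 23], [:: [:: 1; 2; 4; 1; 1]]));
  ([:: 2; 3; 0; 1; 3], (1, [:: 1; 3; 0; 1; 3], [:: 25], [:: [:: 1; 3; 0; 1; 4]; [:: 1; 4; 0; 1; 3]]));
  ([:: 2; 3; 0; 3; 1], (1, [:: 1; 3; 0; 3; 1], [:: 26], [:: [:: 1; 3; 0; 4; 1]; [:: 1; 4; 0; 3; 1]]));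
  ([:: 2; 3; 1; 0; 3], (1, [:: 1; 3; 1; 0; 3], [:: 28], [:: [:: 1; 3; 1; 0; 4]; [:: 1; 4; 1; 0; 3]]));
  ([:: 2; 3; 1; 1; 2], (1, [:: 1; 3; 1; 1; 2], [:: 27; 29], [:: [:: 1; 4; 1; 1; 2]]));
  ([:: 2; 3; 1; 2; 1], (1, [:: 1; 3; 1; 2; 1], [:: 27; 30], [:: [:: 1; 4; 1; 2; 1]]));
  ([:: 2; 3; 1; 3; 0], (1, [:: 1; 3; 1; 3; 0], [:: 31], [:: [:: 1; 3; 1; 4; 0]; [:: 1; 4; 1; 3; 0]]));
  ([:: 2; 3; 2; 1; 1], (1, [:: 1; 3; 2; 1; 1], [:: 29; 30], [:: [:: 1; 4; 2; 1; 1]]));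
  ([:: 2; 3; 3; 0; 1], (1, [:: 1; 3; 3; 0; 1], [:: 32], [:: [:: 1; 3; 4; 0; 1]; [:: 1; 4; 3; 0; 1]]));
  ([:: 2; 3; 3; 1; 0], (1, [:: 1; 3; 3; 1; 0], [:: 33], [:: [:: 1; 3; 4; 1; 0]; [:: 1; 4; 3; 1; 0]]));
  ([:: 3; 0; 2; 1; 3], (1, [:: 3; 0; 1; 1; 3], [:: 35], [:: [:: 3; 0; 1; 1; 4]; [:: 4; 0; 1; 1; 3]]));
  ([:: 3; 0; 2; 3; 1], (1, [:: 3; 0; 1; 3; 1], [:: 36], [:: [:: 3; 0; 1; 4; 1]; [:: 4; 0; 1; 3; 1]]));
  ([:: 3; 0; 3; 2; 1], (1, [:: 3; 0; 3; 1; 1], [:: 38], [:: [:: 3; 0; 4; 1; 1]; [:: 4; 0; 3; 1; 1]]));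
  ([:: 3; 2; 0; 1; 3], (1, [:: 3; 1; 0; 1; 3], [:: 40], [:: [:: 3; 1; 0; 1; 4]; [:: 4; 1; 0; 1; 3]]));
  ([:: 3; 2; 0; 3; 1], (1, [:: 3; 1; 0; 3; 1], [:: 41], [:: [:: 3; 1; 0; 4; 1]; [:: 4; 1; 0; 3; 1]]));
  ([:: 3; 2; 1; 0; 3], (1, [:: 3; 1; 1; 0; 3], [:: 43], [:: [:: 3; 1; 1; 0; 4]; [:: 4; 1; 1; 0; 3]]));
  ([:: 3; 2; 1; 1; 2], (1, [:: 3; 1; 1; 1; 2], [:: 42; 44], [:: [:: 4; 1; 1; 1; 2]]));
  ([:: 3; 2; 1; 2; 1], (1, [:: 3; 1; 1; 2; 1], [:: 42; 45], [:: [:: 4; 1; 1; 2; 1]]));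
  ([:: 3; 2; 1; 3; 0], (1, [:: 3; 1; 1; 3; 0], [:: 46], [:: [:: 3; 1; 1; 4; 0]; [:: 4; 1; 1; 3; 0]]));
  ([:: 3; 2; 2; 1; 1], (1, [:: 3; 1; 2; 1; 1], [:: 44; 45], [:: [:: 4; 1; 2; 1; 1]]));
  ([:: 3; 2; 3; 0; 1], (1, [:: 3; 1; 3; 0; 1], [:: 47], [:: [:: 3; 1; 4; 0; 1]; [:: 4; 1; 3; 0; 1]]));
  ([:: 3; 2; 3; 1; 0], (1, [:: 3; 1; 3; 1; 0], [:: 48], [:: [:: 3; 1; 4; 1; 0]; [:: 4; 1; 3; 1; 0]]));
  ([:: 3; 3; 0; 2; 1], (1, [:: 3; 3; 0; 1; 1], [:: 50], [:: [:: 3; 4; 0; 1; 1]; [:: 4; 3; 0; 1; 1]]));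
  ([:: 3; 3; 2; 0; 1], (1, [:: 3; 3; 1; 0; 1], [:: 52], [:: [:: 3; 4; 1; 0; 1]; [:: 4; 3; 1; 0; 1]]));
  ([:: 3; 3; 2; 1; 0], (1, [:: 3; 3; 1; 1; 0], [:: 53], [:: [:: 3; 4; 1; 1; 0]; [:: 4; 3; 1; 1; 0]]))]%N.

Definition C2 (l : seq nat) := lookup l C2tab.
Definition w2 : wvec := three_d 2.

Lemma chk2a : all (funok w2 BL2 F2l) (iota 0 (size BL2)).
Proof. by vm_compute. Qed.
Lemma chk2b : all (fun l => weqb w2 l ==> certok w2 BL2 C2 l) (comps 5 (degc w2)).
Proof. by vm_compute. Qed.
Lemma chk2c : all (fun l => ok5 l && (sumn l == degc w2) && weqb w2 l) BL2.
Proof. by vm_compute. Qed.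

Definition xabl (a b : nat) : seq nat := [seq (if (i == a) || (i == b) then 0 else 1)%N | i <- iota 0 5].
Definition pairs5 := [seq (a, b) | a <- iota 0 5, b <- iota 0 5].
Definition BL1 : seq (seq nat) := [seq xabl ab.1 ab.2 | ab <- pairs5 & (ab.1 < ab.2)%N].
Definition F1l : seq (seq (seq nat)) := map (fun l => [:: l]) BL1.
Definition C1 (l : seq nat) : option certT := None.
Definition w1 : wvec := three_d 1.
Lemma chk1a : all (funok w1 BL1 F1l) (iota 0 (size BL1)).
Proof. by vm_compute. Qed.
Lemma chk1b : all (fun l => weqb w1 l ==> certok w1 BL1 C1 l) (comps 5 (degc w1)).
Proof. by vm_compute. Qed.
Lemma chk1c : all (fun l => ok5 l && (sumn l == degc w1) && weqb w1 l) BL1.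
Proof. by vm_compute. Qed.

Definition adm_ok d l S := [&& ok5 l, all (fun t => ok5 t && (sumn t == d)) S, killck S,
   odd (count_mem l S) & all (fun t => ~~ blt t l) S].
Definition inadm_ok (BL : seq (seq nat)) l (c : option certT) :=
  match c with
  | Some (k, a, nf, gl) =>
      let ys := map (nth [::] BL) nf ++ gl in
      [&& ok5 l, all ok5 ys, all (fun y => blt y l) ys, (0 < k)%N, size a == 5%N &
          par_eq (l :: ys) (sql k a)]
  | None => false
  end.

Lemma chk1d : all (fun l => weqb w1 l ==> has (fun ab => (ab.1 < ab.2)%N && (l == xabl ab.1 ab.2)) pairs5) (box [:: 1; 1; 1; 1; 1])%N.
Proof. by vm_compute. Qed.
Lemma chk1e : all (fun ab => (ab.1 < ab.2)%N ==> adm_ok 3 (xabl ab.1 ab.2) [:: xabl ab.1 ab.2]) pairs5.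
Proof. by vm_compute. Qed.

Definition L15 : seq (seq nat) :=
  [:: [:: 1; 1; 2; 2; 3]; [:: 1; 1; 2; 3; 2]; [:: 1; 1; 3; 2; 2]; [:: 1; 2; 1; 2; 3];
      [:: 1; 2; 1; 3; 2]; [:: 1; 2; 2; 1; 3]; [:: 1; 2; 2; 3; 1]; [:: 1; 2; 3; 1; 2];
      [:: 1; 2; 3; 2; 1]; [:: 1; 3; 1; 2; 2]; [:: 1; 3; 2; 1; 2]; [:: 1; 3; 2; 2; 1];
      [:: 3; 1; 1; 2; 2]; [:: 3; 1; 2; 1; 2]; [:: 3; 1; 2; 2; 1]]%N.
Lemma list15E : list15 = map mk L15.
Proof. reflexivity. Qed.

Lemma chk2d : all (fun l => (all (fun e => 0 < e)%N l && weqb w2 l) ==>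
   (if l \in L15 then adm_ok 9 l (nth [::] F2l (index l BL2)) else inadm_ok BL2 l (C2 l)))
   (box [:: 3; 3; 3; 3; 3])%N.
Proof. by vm_compute. Qed.
Lemma chk2e : all ok5 L15. Proof. by vm_compute. Qed.

Lemma adm_okP d l S : adm_ok d l S -> admissible (mk l).
Proof. by move=> /and5P [o HS Hk Ho Hb]; apply: (adm_cert o HS Hk Ho Hb). Qed.

Lemma inadm_okP BL l c : inadm_ok BL l c -> inadmissible (mk l).
Proof.
case: c => [[[[k a] nf] gl]|] //= /and5P [o oys Hlt k0 /andP [sa Hpar]].
apply: (@inadm_cert l _ [:: (k, a)] o oys Hlt); first by rewrite /= k0 sa.
by rewrite /= cats0.
Qed.

Lemma wt_bound (x : mon5) r : (forall i, (r <= i)%N -> wt x i = 0%N) -> forall j, (x j < 2 ^ r)%N.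
Proof.
move=> H j; rewrite ltnNge; apply/negP => Hle.
have x0 : (0 < x j)%N by apply: leq_trans Hle; rewrite expn_gt0.
set e := trunc_log 2 (x j).
have H1 : (2 ^ e <= x j)%N := trunc_logP (isT : (1 < 2)%N) x0.
have H2 : (x j < 2 ^ e.+1)%N := trunc_log_ltn (x j) (isT : (1 < 2)%N).
have re : (r <= e)%N.
  have : (2 ^ r < 2 ^ e.+1)%N := leq_ltn_trans Hle H2.
  by rewrite ltn_exp2l // ltnS.
have q1 : (x j %/ 2 ^ e = 1)%N.
  apply/eqP; rewrite eqn_leq; apply/andP; split.
    by rewrite -ltnS ltn_divLR ?expn_gt0 // -expnS.
  by rewrite leq_divRL ?expn_gt0 // mul1n.
have := H e re; rewrite /wt (bigD1 j) //= /alpha q1 /=.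
by rewrite add1n.
Qed.

Lemma Xab_mk (a b : 'I_5) : Xab a b = mk (xabl a b).
Proof.
apply/mnmP => i; rewrite mnmE mkE /xabl (nth_map 0%N) ?size_iota // nth_iota // add0n.
Qed.

Lemma seqm_box (x : mon5) c : (forall j, x j <= c)%N -> seqm x \in box (nseq 5 c).
Proof.
move=> H; rewrite mem_box size_seqm size_nseq eqxx andTb; apply/forallP => i.
by rewrite nth_seqm nth_nseq (ltn_ord i).
Qed.

Lemma ok5_seqm (x : mon5) : (forall j, x j < 16)%N -> ok5 (seqm x).
Proof.
move=> H; apply/andP; split; first by rewrite size_seqm.
by apply/allP => e /mapP [i _ ->].
Qed.

Local Close Scope ring_scope.

Theorem proposition4 :
  ((forall x : mon5, (forall i, wt x i = wfun (three_d 1) i) ->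
      (admissible x <-> exists a b : 'I_5, (a < b)%N /\ x = Xab a b))
   /\ dimQP_is (three_d 1) 10)
  /\
  ((forall x : mon5, (forall i, wt x i = wfun (three_d 2) i) ->
      (forall j : 'I_5, (0 < x j)%N) ->
      (admissible x <-> x \in list15))
   /\ dimQP_is (three_d 2) 55).
Proof.
split; split.
- move=> x Hw.
  have Hb : forall j, (x j < 2 ^ 1)%N.
    by apply: wt_bound => i Hi; rewrite Hw /wfun nth_default // size_nseq.
  have ol : ok5 (seqm x) by apply: ok5_seqm => j; apply: leq_trans (Hb j) _.
  have wl : weqb w1 (seqm x) by apply/(weqP _ ol); rewrite ?mk_seqm.
  have lb : seqm x \in box (nseq 5 1) by apply: seqm_box => j; have := Hb j.
  split => [_|[a [b [Hab ->]]]].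
    move: (implyP (allP chk1d _ lb) wl) => /hasP [[a b] Hp /andP [/= Hab /eqP Hl]].
    move: Hp => /allpairsP [[a' b'] [Ha Hb' [Ea Eb]]]; subst a' b'.
    rewrite mem_iota /= add0n in Ha; rewrite mem_iota /= add0n in Hb'.
    exists (Ordinal Ha), (Ordinal Hb'); split => //.
    by rewrite Xab_mk /= -Hl mk_seqm.
  rewrite Xab_mk; apply: (adm_okP (d := 3)).
  have Hp : (nat_of_ord a, nat_of_ord b) \in pairs5.
    by apply/allpairsP; exists (nat_of_ord a, nat_of_ord b); rewrite !mem_iota /= !add0n !ltn_ord.
  exact: (implyP (allP chk1e _ Hp) Hab).
- exact: (@dim_cert w1 BL1 F1l C1 isT isT chk1c chk1a chk1b).
- move=> x Hw Hpos.
  have Hb : forall j, (x j < 2 ^ 2)%N.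
    by apply: wt_bound => i Hi; rewrite Hw /wfun nth_default // size_nseq.
  have ol : ok5 (seqm x) by apply: ok5_seqm => j; apply: leq_trans (Hb j) _.
  have wl : weqb w2 (seqm x) by apply/(weqP _ ol); rewrite ?mk_seqm.
  have lb : seqm x \in box (nseq 5 3) by apply: seqm_box => j; have := Hb j.
  have pl : all (fun e => 0 < e)%N (seqm x) by apply/allP => e /mapP [i _ ->].
  have Hmem : (x \in list15) = (seqm x \in L15).
    rewrite list15E; apply/mapP/idP => [[t Ht Heq]|Hin]; last by exists (seqm x); rewrite ?mk_seqm.
    have ot := allP chk2e _ Ht.
    rewrite (_ : seqm x = t) //; apply: mk_inj; rewrite ?size_seqm ?mk_seqm //.
    by case/andP: ot => /eqP.
  have := implyP (allP chk2d _ lb) (introT andP (conj pl wl)).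
  rewrite Hmem; case: ifP => _.
    by move/adm_okP; rewrite mk_seqm.
  move/inadm_okP; rewrite mk_seqm => Hi; split => // Ha; exfalso; exact: Ha Hi.
- exact: (@dim_cert w2 BL2 F2l C2 isT isT chk2c chk2a chk2b).
Qed.
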